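(* For every $k\ge0$, the restriction $f_k$ of $f$ to $\mathcal{P}_k$ is an order isomorphism from $\mathcal{P}_k$ (with pattern containment order) onto $\widehat{\mathcal{A}}_{k+1}$ (with subword order): it is a bijection, and for $\sigma,\pi\in\mathcal{P}_k$ we have $\sigma\le\pi$ if and only if $f(\sigma)\le f(\pi)$.
   Context: A permutation of length $n\ge1$ is a word $\pi=\pi_1\cdots\pi_n$ containing each of $1,\dots,n$ exactly once. $\sigma\le\pi$ (pattern containment) if $\pi$ has a subsequence whose letters are in the same relative order as the letters of $\sigma$. A descent of $\pi$ is an index $i$ with $\pi_i>\pi_{i+1}$; $\mathcal{P}_k$ is the set of permutations with exactly $k$ descents, with the induced order. For a letter $c$ of $\pi$, $d_\pi(c)$ is $1$ plus the number of descents at indices before the position of $c$. Words are finite sequences of positive integers with subword order: $v\le w$ if $v$ equals some (not necessarily consecutive) subsequence of $w$. $\max(w)$ is the largest letter of $w$. $\widehat{\mathcal{A}}_k$ is the set of words $w$ with $\max(w)=k$ such that (AC1) each $i\in\{1,\dots,k\}$ occurs in $w$, and (AC2) for each $i\in\{1,\dots,k-1\}$ the rightmost occurrence of $i$ is preceded by an occurrence of $i+1$, with subword order. $f(\pi)=d_\pi(1)d_\pi(2)\cdots d_\pi(n)$. *)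

(* Defs.v *)
From mathcomp Require Import all_boot.
Set Implicit Arguments. Unset Strict Implicit. Unset Printing Implicit Defensive.

Definition is_perm (p : seq nat) : bool :=
  (0 < size p) && perm_eq p (iota 1 (size p)).

Definition contains (pi sigma : seq nat) : Prop :=
  exists s : seq nat,
    [/\ subseq s pi, size s = size sigma &
        forall i j, i < size sigma -> j < size sigma ->
          (nth 0 sigma i < nth 0 sigma j) = (nth 0 s i < nth 0 s j)].

Definition pat_le (sigma pi : seq nat) : Prop := contains pi sigma.

Definition is_descent (p : seq nat) (i : nat) : bool :=
  (i.+1 < size p) && (nth 0 p i > nth 0 p i.+1).

Definition des (p : seq nat) : nat := count (is_descent p) (iota 0 (size p)).

Definition dval (p : seq nat) (c : nat) : nat :=
  1 + count (is_descent p) (iota 0 (index c p)).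

Definition fmap (p : seq nat) : seq nat := map (dval p) (iota 1 (size p)).

Definition maxw (w : seq nat) : nat := \max_(x <- w) x.

(* 0-based position of the rightmost occurrence of x in w (assuming x \in w) *)
Definition last_pos (x : nat) (w : seq nat) : nat := (size w).-1 - index x (rev w).

Definition inAhat (k : nat) (w : seq nat) : bool :=
  [&& all (fun x => 0 < x) w,
      maxw w == k,
      all (fun i => i \in w) (iota 1 k) &
      all (fun i => i.+1 \in take (last_pos i w) w) (iota 1 k.-1) ].

(* Main.v *)
Require Import Defs.
From mathcomp Require Import all_boot zify.
Set Implicit Arguments. Unset Strict Implicit. Unset Printing Implicit Defensive.

Definition Dp (p : seq nat) (i : nat) := count (is_descent p) (iota 0 i).

Lemma DpS p i : Dp p i.+1 = Dp p i + is_descent p i.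
Proof. by rewrite /Dp -addn1 iotaD count_cat /= addn0 add0n. Qed.

Lemma Dp0 p : Dp p 0 = 0. Proof. by []. Qed.

Lemma Dp_mono p i j : i <= j -> Dp p i <= Dp p j.
Proof.
move=> /subnKC <-; rewrite /Dp iotaD count_cat; exact: leq_addr.
Qed.

Lemma dvalE p c : dval p c = (Dp p (index c p)).+1.
Proof. by rewrite /dval add1n. Qed.

Lemma desE p : des p = Dp p (size p).
Proof. by []. Qed.

Lemma Dp_last p : 0 < size p -> Dp p (size p).-1 = des p.
Proof.
move=> h; rewrite desE -{2}(prednK h) DpS.
by rewrite /is_descent prednK // ltnn /= addn0.
Qed.

Lemma perm_uniqP p : is_perm p -> uniq p.
Proof. by case/andP=> _ /perm_uniq ->; exact: iota_uniq. Qed.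

Lemma perm_memP p c : is_perm p -> (c \in p) = (0 < c <= size p).
Proof. by case/andP=> _ /perm_mem ->; rewrite mem_iota add1n ltnS. Qed.

Lemma size_fmap p : size (fmap p) = size p.
Proof. by rewrite /fmap size_map size_iota. Qed.

Lemma nth_fmap p j : j < size p -> nth 0 (fmap p) j = dval p j.+1.
Proof. by move=> h; rewrite /fmap (nth_map 0) ?size_iota // nth_iota // add1n. Qed.

Definition lexlt (d : nat -> nat) (a b : nat) :=
  (d a < d b) || ((d a == d b) && (a < b)).

Lemma lexlt_trans d : transitive (lexlt d).
Proof.
move=> b a c; rewrite /lexlt.
case/orP=> [h1|/andP[/eqP e1 h1]]; case/orP=> [h2|/andP[/eqP e2 h2]].
- by rewrite (ltn_trans h1 h2).
- by rewrite -e2 h1.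
- by rewrite e1 h2.
- by rewrite e1 e2 eqxx (ltn_trans h1 h2) orbT.
Qed.

Lemma lexlt_irr d : irreflexive (lexlt d).
Proof. by move=> a; rewrite /lexlt !ltnn andbF. Qed.

Lemma lexlt_asym d a b : lexlt d a b -> lexlt d b a -> False.
Proof. by move=> h1 h2; have := lexlt_trans h1 h2; rewrite lexlt_irr. Qed.

Lemma perm_sorted p : is_perm p -> sorted (lexlt (dval p)) p.
Proof.
move=> hp; have u := perm_uniqP hp.
apply/(sortedP 0) => i hi.
rewrite /lexlt !dvalE !index_uniq // ?(ltn_trans _ hi) // DpS ltnS.
case hd: (is_descent p i); first by rewrite addn1 ltnSn.
rewrite addn0 ltnn eqxx /=.
move: hd; rewrite /is_descent hi /= => /negbT; rewrite -leqNgt leq_eqVlt.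
by rewrite nth_uniq // ?(ltn_trans (ltnSn i) hi) // (ltn_eqF (ltnSn i)).
Qed.

Lemma perm_lt p i j : is_perm p -> i < j -> j < size p ->
  lexlt (dval p) (nth 0 p i) (nth 0 p j).
Proof.
move=> hp ij js; apply: (sorted_ltn_nth (@lexlt_trans _) 0 (perm_sorted hp)) => //.
by rewrite inE (ltn_trans ij).
Qed.

Lemma maxw_ge w x : x \in w -> x <= maxw w.
Proof.
rewrite /maxw; elim: w => //= a w IH; rewrite inE big_cons => /orP[/eqP->|h].
  exact: leq_maxl.
exact: leq_trans (IH h) (leq_maxr _ _).
Qed.

Lemma maxw_eq w m : m \in w -> (forall x, x \in w -> x <= m) -> maxw w = m.
Proof.
move=> hm hx; apply/eqP; rewrite eqn_leq maxw_ge // andbT.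
rewrite /maxw; elim: w hx {hm} => [|a w IH] hx; first by rewrite big_nil.
rewrite big_cons geq_max hx ?mem_head // IH // => x hx'.
by apply: hx; rewrite inE hx' orbT.
Qed.

Lemma ivt (f : nat -> nat) : f 0 = 0 -> (forall t, f t <= f t.+1 <= (f t).+1) ->
  forall N v, v <= f N -> exists t, t <= N /\ f t = v.
Proof.
move=> f0 hf; elim=> [|N IH] v hv.
  by exists 0; split=> //; move: hv; rewrite f0; lia.
case: (leqP v (f N)) => h; first by case: (IH v h) => t [h1 h2]; exists t; split=> //; lia.
exists N.+1; split=> //; have := hf N; lia.
Qed.

Lemma ivt_strict (f : nat -> nat) : f 0 = 0 -> (forall t, f t <= f t.+1 <= (f t).+1) ->
  forall N v, v < f N -> exists t, [/\ t < N, f t = v & f t.+1 = v.+1].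
Proof.
move=> f0 hf; elim=> [|N IH] v hv; first by rewrite f0 in hv.
case: (ltnP v (f N)) => h.
  by case: (IH v h) => t [h1 h2 h3]; exists t; split=> //; lia.
exists N; have := hf N; split=> //; lia.
Qed.

Lemma Dp_step p t : Dp p t <= Dp p t.+1 <= (Dp p t).+1.
Proof. by rewrite DpS; case: (is_descent p t); rewrite ?addn0 ?addn1 leqnn ?leqnSn. Qed.

Lemma last_pos_ge (w : seq nat) (j x : nat) : j < size w -> nth 0 w j = x -> j <= last_pos x w.
Proof.
move=> hj hx; rewrite /last_pos.
have hr : nth 0 (rev w) (size w - j.+1) = x.
  by rewrite nth_rev; [rewrite (_ : size w - (size w - j.+1).+1 = j) //; lia | lia].
have : index x (rev w) <= size w - j.+1.
  rewrite leqNgt; apply/negP => hlt.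
  have := before_find 0 hlt; rewrite hr /= eqxx //.
lia.
Qed.

Lemma last_pos_nth (w : seq nat) (x : nat) : x \in w -> last_pos x w < size w /\ nth 0 w (last_pos x w) = x.
Proof.
move=> hx; have hr : x \in rev w by rewrite mem_rev.
have hi := hr; rewrite -index_mem size_rev in hi.
have := nth_index 0 hr; rewrite nth_rev ?size_rev // => e.
have {}hi : index x (rev w) < @size nat w by exact: hi.
have {}e : nth 0 w (@size nat w - (index x (rev w)).+1) = x by exact: e.
rewrite /last_pos; split; first by lia.
by rewrite -{2}e; congr nth; lia.
Qed.

Lemma dval_nth p t : is_perm p -> t < size p -> dval p (nth 0 p t) = (Dp p t).+1.
Proof. by move=> hp ht; rewrite dvalE index_uniq // perm_uniqP. Qed.

Lemma nth_range p t : is_perm p -> t < size p -> 0 < nth 0 p t <= size p.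
Proof. by move=> hp ht; rewrite -(perm_memP _ hp) mem_nth. Qed.

Lemma fmap_at p c : is_perm p -> 0 < c <= size p -> nth 0 (fmap p) c.-1 = dval p c.
Proof. by move=> hp /andP[h1 h2]; rewrite nth_fmap ?prednK //; lia. Qed.

Lemma part1 k p : is_perm p -> des p = k -> inAhat k.+1 (fmap p).
Proof.
move=> hp hk; have n0 : 0 < size p by case/andP: hp.
have hl := Dp_last n0; rewrite hk in hl.
have mem_w : forall t, t < size p -> (Dp p t).+1 \in fmap p.
  move=> t ht; have /andP[c1 c2] := nth_range hp ht.
  rewrite -(dval_nth hp ht) -(fmap_at hp) ?c1 ?c2 //; apply: mem_nth.
  by rewrite size_fmap; lia.
have w_le : forall x, x \in fmap p -> 0 < x <= k.+1.
  move=> x /mapP[c _ ->]; rewrite dvalE ltnS /= -hk desE; apply: Dp_mono.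
  exact: index_size.
apply/and4P; split.
- by apply/allP=> x /w_le /andP[].
- apply/eqP/maxw_eq; last by move=> x /w_le /andP[].
  rewrite -hl; apply: mem_w; lia.
- apply/allP=> i; rewrite mem_iota => /andP[i1 i2].
  have hv : i.-1 <= Dp p (size p).-1 by rewrite hl; lia.
  have [t [ht e]] := ivt (Dp0 p) (@Dp_step p) hv.
  have -> : i = (Dp p t).+1 by lia.
  apply: mem_w; lia.
- apply/allP=> i; rewrite mem_iota => /andP[i1 i2].
  have hv : i.-1 < Dp p (size p).-1 by rewrite hl; lia.
  have [t [ht e1 e2]] := ivt_strict (Dp0 p) (@Dp_step p) hv.
  have hts : t.+1 < size p by lia.
  have hdes : is_descent p t by move: e2; rewrite DpS e1; case: (is_descent p t) => //=; lia.
  move: (hdes); rewrite /is_descent hts /= => hab.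
  set a := nth 0 p t in hab *; set b := nth 0 p t.+1 in hab *.
  have /andP[a1 a2] := nth_range hp (ltnW hts).
  have /andP[b1 b2] := nth_range hp hts.
  have wa : nth 0 (fmap p) a.-1 = i by rewrite fmap_at ?a1 ?a2 // dval_nth ?e1 //; lia.
  have wb : nth 0 (fmap p) b.-1 = i.+1 by rewrite fmap_at ?b1 ?b2 // dval_nth ?e2 //; lia.
  have hlp : a.-1 <= last_pos i (fmap p) by apply: last_pos_ge wa; rewrite size_fmap; lia.
  rewrite -wb; have -> : nth 0 (fmap p) b.-1 = nth 0 (take (last_pos i (fmap p)) (fmap p)) b.-1.
    by rewrite nth_take //; lia.
  apply: mem_nth; rewrite size_take; case: ifP; rewrite ?size_fmap => _; lia.
Qed.

Lemma part2 k s p : is_perm s -> des s = k -> is_perm p -> des p = k ->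
  fmap s = fmap p -> s = p.
Proof.
move=> hs ks hp kp e.
have hn : size s = size p by rewrite -size_fmap e size_fmap.
have dv : dval s =1 dval p.
  move=> c; case: (boolP (c \in s)) => hc.
    have := hc; rewrite (perm_memP _ hs) => hc'.
    by rewrite -(fmap_at hs hc') e fmap_at // -hn.
  have hc2 : c \notin p by rewrite (perm_memP _ hp) -hn -(perm_memP _ hs).
  by rewrite !dvalE !memNindex // -!desE ks kp.
apply: (irr_sorted_eq (@lexlt_trans (dval p)) (@lexlt_irr (dval p))).
- have e2 : lexlt (dval s) =2 lexlt (dval p) by move=> x y; rewrite /lexlt !dv.
  by rewrite -(eq_sorted e2) perm_sorted.
- exact: perm_sorted.
- by move=> c; rewrite (perm_memP _ hs) (perm_memP _ hp) hn.
Qed.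

Definition lexle (d : nat -> nat) (a b : nat) :=
  (d a < d b) || ((d a == d b) && (a <= b)).

Lemma lexle_trans d : transitive (lexle d).
Proof.
move=> b a c; rewrite /lexle.
case/orP=> [h1|/andP[/eqP e1 h1]]; case/orP=> [h2|/andP[/eqP e2 h2]].
- by rewrite (ltn_trans h1 h2).
- by rewrite -e2 h1.
- by rewrite e1 h2.
- by rewrite e1 e2 eqxx (leq_trans h1 h2) orbT.
Qed.

Lemma lexle_total d : total (lexle d).
Proof.
move=> a b; rewrite /lexle; case: (ltngtP (d a) (d b)) => //= _.
by rewrite leq_total.
Qed.

Definition dw (w : seq nat) c := nth 0 w c.-1.

Lemma mem_nthN (w : seq nat) j : j < @size nat w -> nth 0 w j \in w.
Proof. exact: mem_nth. Qed.

Lemma index_memN (w : seq nat) (x : nat) : (index x w < @size nat w) = (x \in w).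
Proof. exact: index_mem. Qed.

Section P3.
Variables (k : nat) (w : seq nat).
Hypothesis hw : inAhat k.+1 w.

Lemma w_range x : x \in w -> 0 < x <= k.+1.
Proof.
case/and4P: hw => hpos /eqP hmax _ _ hx.
by rewrite (allP hpos x hx) /= -hmax maxw_ge.
Qed.

Lemma w_mem v : 0 < v <= k.+1 -> v \in w.
Proof. by case/and4P: hw => _ _ /allP h _ hv; apply: h; rewrite mem_iota add1n ltnS. Qed.

Lemma d_range c : 0 < c <= size w -> 0 < dw w c <= k.+1.
Proof. by move=> hc; apply: w_range; apply: mem_nthN; lia. Qed.

Lemma d_hit v : 0 < v <= k.+1 -> exists c, 0 < c <= size w /\ dw w c = v.
Proof.
move=> hv; have hm := w_mem hv; exists (index v w).+1; split.
  by move: hm; rewrite -index_memN; lia.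
by rewrite /dw /= nth_index.
Qed.

Lemma d_ac2 v : 0 < v <= k -> exists c1 c2,
  [/\ c1 < c2, 0 < c1, c2 <= size w, dw w c1 = v.+1 & dw w c2 = v].
Proof.
move=> hv; case/and4P: hw => _ _ _ /allP h.
have := h v; rewrite mem_iota add1n prednK ?hv; last by lia.
move=> /(_ isT) ht.
have hm : v \in w by apply: w_mem; lia.
have [lp1 lp2] := last_pos_nth hm.
set lp := last_pos v w in lp1 lp2 ht.
set j := index v.+1 (take lp w).
have hj : j < size (take lp w) by rewrite index_mem.
have hj2 : j < lp by move: hj; rewrite size_take lp1.
have hj3 : nth 0 w j = v.+1 by rewrite -(nth_take 0 hj2) nth_index.
exists j.+1, lp.+1; split=> //; lia.
Qed.


Lemma part3 : exists pi, [/\ is_perm pi, des pi = k & fmap pi = w].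
Proof.
have n0 : 0 < size w.
  have := @w_mem 1 isT; rewrite -index_memN; lia.
set p := sort (lexle (dw w)) (iota 1 (size w)).
have pe : perm_eq p (iota 1 (size w)) by rewrite /p perm_sort perm_refl.
have sz : size p = size w by rewrite (perm_size pe) size_iota.
have hp : is_perm p by rewrite /is_perm sz n0 pe.
have u := perm_uniqP hp.
have memp c : (c \in p) = (0 < c <= size w) by rewrite (perm_memP _ hp) sz.
have F i j : i < j -> j < size w -> lexlt (dw w) (nth 0 p i) (nth 0 p j).
  move=> ij js.
  have hle : lexle (dw w) (nth 0 p i) (nth 0 p j).
    apply: (sorted_ltn_nth (@lexle_trans _) 0 (sort_sorted (@lexle_total _) _)) => //;
      rewrite inE sz //; lia.
  have hne : nth 0 p i != nth 0 p j by rewrite nth_uniq ?sz //; lia.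
  move: hle hne; rewrite /lexle /lexlt; case: (_ < _) => //= /andP[-> h] hne.
  by rewrite ltn_neqAle hne h.
have Fi x y : x \in p -> y \in p -> lexlt (dw w) x y -> index x p < index y p.
  move=> hx hy hl; case: (ltngtP (index x p) (index y p)) => // h.
    have := F _ _ h; rewrite -sz index_memN => /(_ hx); rewrite !nth_index // => h2.
    by case: (lexlt_asym hl h2).
  have exy : x = y by rewrite -(nth_index 0 hx) -(nth_index 0 hy) h.
  by move: hl; rewrite exy lexlt_irr.
have Ff x y : x \in p -> y \in p -> index x p < index y p -> lexlt (dw w) x y.
  move=> hx hy h; have := F _ _ h; rewrite -sz index_memN => /(_ hy).
  by rewrite !nth_index.
have nthp i : i < size w -> nth 0 p i \in p by move=> hi; apply: mem_nthN; rewrite sz.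
have idxp i : i < size w -> index (nth 0 p i) p = i by move=> hi; rewrite index_uniq ?sz.
have C : forall i, i < size w -> (Dp p i).+1 = dw w (nth 0 p i).
  elim=> [|i IH] hi.
    have ha := nthp 0 hi; have := ha; rewrite memp => /d_range r.
    rewrite Dp0; case: (ltngtP 1 (dw w (nth 0 p 0))) => // h; last by lia.
    have [c [hc dc]] := @d_hit 1 isT.
    have := Fi c _ _ ha; rewrite memp idxp // => /(_ hc).
    by rewrite /lexlt dc h => /(_ isT).
  have hi' : i < size w by lia.
  have := IH hi'; have hab := F _ _ (ltnSn i) hi.
  have ha := nthp _ hi'; have hb := nthp _ hi.
  have := ha; rewrite memp => /d_range ra.
  have := hb; rewrite memp => /d_range rb.
  set a := nth 0 p i in hab ha ra *; set b := nth 0 p i.+1 in hab hb rb *.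
  move=> IHe; rewrite DpS.
  case/orP: hab => [hlt|/andP[/eqP deq altb]]; last first.
    rewrite /is_descent -/a -/b (ltnNge b a) (ltnW altb) andbF addn0 IHe deq //.
  set v := dw w a in IHe hlt ra.
  have dbv : dw w b = v.+1.
    case: (ltngtP (dw w b) v.+1) => // h; first by lia.
    have hv1 : 0 < v.+1 <= k.+1 by lia.
    have [c [hc dc]] := d_hit hv1.
    have hcp : c \in p by rewrite memp.
    have h1 : lexlt (dw w) a c by rewrite /lexlt dc ltnSn.
    have h2 : lexlt (dw w) c b by rewrite /lexlt dc h.
    move: (Fi a c ha hcp h1) (Fi c b hcp hb h2); rewrite !idxp //; lia.
  have hvk : 0 < v <= k by lia.
  have [c1 [c2 [c12 c10 c2n dc1 dc2]]] := d_ac2 hvk.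
  have hc1 : c1 \in p by rewrite memp; lia.
  have hc2 : c2 \in p by rewrite memp; lia.
  have c2a : c2 <= a.
    rewrite leqNgt; apply/negP => h.
    have := Fi a c2 ha hc2; rewrite /lexlt dc2 ltnn eqxx h /= => /(_ isT).
    rewrite idxp // leq_eqVlt => /orP[/eqP e|e].
      by move: dc2; rewrite -(nth_index 0 hc2) -e -/b dbv; lia.
    have := Ff b c2 hb hc2; rewrite idxp // => /(_ e); rewrite /lexlt dbv dc2; lia.
  have bc1 : b <= c1.
    rewrite leqNgt; apply/negP => h.
    have := Fi c1 b hc1 hb; rewrite /lexlt dc1 dbv ltnn eqxx h /= => /(_ isT).
    rewrite idxp // ltnS leq_eqVlt => /orP[/eqP e|e].
      by move: dc1; rewrite -(nth_index 0 hc1) e -/a -/v; lia.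
    have := Ff c1 a hc1 ha; rewrite idxp // => /(_ e); rewrite /lexlt dc1 -/v; lia.
  rewrite /is_descent sz hi -/a -/b (_ : b < a) ?IHe ?addn1 ?dbv //; lia.
have Cl : dw w (nth 0 p (size w).-1) = k.+1.
  have hl : (size w).-1 < size w by lia.
  have hlp := nthp _ hl; have := hlp; rewrite memp => /d_range r.
  case: (ltngtP (dw w (nth 0 p (size w).-1)) k.+1) => // h; first last; first by lia.
  have hk1 : 0 < k.+1 <= k.+1 by lia.
  have [c [hc dc]] := d_hit hk1.
  have hcp : c \in p by rewrite memp.
  have := Fi _ c hlp hcp; rewrite /lexlt dc h idxp // => /(_ isT).
  have := hc; rewrite -memp -index_memN -sz; lia.
exists p; split=> //.
  have hp0 : 0 < size p by rewrite sz.
  rewrite -(Dp_last hp0) sz.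
  by apply/eqP; rewrite -eqSS C ?Cl //; lia.
apply: (@eq_from_nth _ 0); rewrite size_fmap sz // => j hj.
rewrite nth_fmap ?sz // dvalE.
have hj1 : j.+1 \in p by rewrite memp.
rewrite C; last by rewrite -sz index_memN.
by rewrite nth_index.
Qed.

End P3.

Lemma squeeze (R Q : nat -> nat) m k : Q 0 = 0 -> Q m.-1 = k -> R m.-1 <= k ->
  (forall j, j.+1 < m -> R j + Q j.+1 <= R j.+1 + Q j) ->
  forall i, i < m -> R i = Q i.
Proof.
move=> q0 qm rm st.
have ch : forall i j, i <= j -> j < m -> R i + Q j <= R j + Q i.
  move=> i; elim=> [|j IH] ij jm; first by have -> : i = 0 by lia.
  case: (ltngtP i j.+1) => h; last by rewrite h.
    have ij' : i <= j by lia.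
    have jm' : j < m by lia.
    have := IH ij' jm'; have := st j jm; lia.
  lia.
move=> i im.
have im1 : i <= m.-1 by lia.
have mm : m.-1 < m by lia.
have h1 := ch i m.-1 im1 mm.
have h2 := ch 0 i (leq0n i) im.
lia.
Qed.

Lemma perm_lt_idx p x y : is_perm p -> x \in p -> y \in p ->
  index x p < index y p -> lexlt (dval p) x y.
Proof.
move=> hp hx hy h; have := perm_lt hp h; rewrite index_mem => /(_ hy).
by rewrite !nth_index.
Qed.

Lemma part4b s p : is_perm s -> is_perm p ->
  subseq (fmap s) (fmap p) -> pat_le s p.
Proof.
move=> hs hp /subseqP[mk hmk e].
set L := mask mk (iota 1 (size p)).
have eL : fmap s = map (dval p) L by rewrite e [fmap p]/fmap map_mask.
have sL : size L = size s by rewrite -(size_map (dval p)) -eL size_fmap.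
have Lsort : sorted ltn L.
  apply: (subseq_sorted ltn_trans (mask_subseq mk _)); exact: iota_ltn_sorted.
have Lmem x : x \in L -> x \in p.
  by move/mem_mask; rewrite mem_iota (perm_memP _ hp) add1n ltnS.
pose phi x := nth 0 L x.-1.
have phi_mono x y : x < y -> 0 < x -> y <= size s -> phi x < phi y.
  move=> xy x0 ym.
  apply: (sorted_ltn_nth ltn_trans 0 Lsort); rewrite ?inE ?sL; lia.
have dv x : 0 < x <= size s -> dval s x = dval p (phi x).
  move=> hx; rewrite -(fmap_at hs hx) eL (nth_map 0) // sL; lia.
have rng x : x \in s -> 0 < x <= size s by rewrite (perm_memP _ hs).
set t := map phi s.
have tsort : sorted (lexlt (dval p)) t.
  rewrite sorted_map.
  apply: (@sub_in_sorted _ (fun x => 0 < x <= size s) (lexlt (dval s))).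
  - move=> x y hx hy; rewrite /relpre /= /lexlt -!dv //.
    case/orP=> [->//|/andP[-> h]]; by rewrite phi_mono ?orbT //; lia.
  - by apply/allP=> x /rng.
  - exact: perm_sorted.
have tmem x : (x \in t) = (x \in L).
  apply/mapP/idP => [[y hy ->]|hx].
    rewrite /phi; apply: mem_nth; move: (rng _ hy); rewrite sL; lia.
  exists (index x L).+1.
    by rewrite (perm_memP _ hs) -sL index_mem hx.
  by rewrite /phi /= nth_index.
have teq : t = filter (mem L) p.
  apply: (irr_sorted_eq (@lexlt_trans (dval p)) (@lexlt_irr (dval p))) => //.
    apply: sorted_filter; [exact: lexlt_trans | exact: perm_sorted].
  move=> x; rewrite tmem mem_filter /=.
  by case hx: (x \in L) => //=; rewrite Lmem.
exists t; split.
- by rewrite teq filter_subseq.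
- by rewrite size_map.
- move=> i j hi hj; rewrite !(nth_map 0) //.
  have := rng _ (mem_nth 0 hi); have := rng _ (mem_nth 0 hj).
  set x := nth 0 s i; set y := nth 0 s j => ry rx.
  case: (ltngtP x y) => h.
  + by rewrite phi_mono //; lia.
  + by apply/esym/negbTE; rewrite -leqNgt ltnW // phi_mono //; lia.
  + by rewrite h ltnn.
Qed.

Lemma part4a k s p : is_perm s -> des s = k -> is_perm p -> des p = k ->
  pat_le s p -> subseq (fmap s) (fmap p).
Proof.
move=> hs ks hp kp [t [st sz iso]].
have up := perm_uniqP hp; have us := perm_uniqP hs.
have ut : uniq t := subseq_uniq st up.
have tmem x : x \in t -> x \in p by apply: (mem_subseq st).
have m0 : 0 < size s by case/andP: hs.
have posinc i j : i < j -> j < size s -> index (nth 0 t i) p < index (nth 0 t j) p.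
  move=> ij js.
  have sp : sorted (fun a b => index a p < index b p) p.
    apply/(sortedP 0) => l hl; have hl2 : l < size p := ltnW hl; by rewrite !index_uniq.
  have stt : sorted (fun a b => index a p < index b p) t.
    apply: (subseq_sorted _ st sp) => b a c /= h1 h2; exact: ltn_trans h1 h2.
  apply: (sorted_ltn_nth _ 0 stt) => //; rewrite ?inE ?sz //; try lia.
  move=> b a c /= h1 h2; exact: ltn_trans h1 h2.
pose R i := Dp p (index (nth 0 t i) p).
pose Q i := Dp s i.
have RQ : forall i, i < size s -> R i = Q i.
  apply: (@squeeze R Q (size s) k) => //.
  - by rewrite /Q Dp_last.
  - rewrite /R -kp desE; apply: Dp_mono; exact: index_size.
  - move=> j hj; rewrite /Q DpS.
    have hpi := posinc _ _ (ltnSn j) hj.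
    have hRm : R j <= R j.+1 by apply: Dp_mono; exact: ltnW.
    case hd: (is_descent s j); last by rewrite addn0; lia.
    move: hd; rewrite /is_descent hj /= => hd.
    have := iso j.+1 j hj (ltnW hj); rewrite hd => /esym htd.
    have hx : nth 0 t j \in p by apply: tmem; apply: mem_nth; rewrite sz; lia.
    have hy : nth 0 t j.+1 \in p by apply: tmem; apply: mem_nth; rewrite sz; lia.
    have := perm_lt_idx hp hx hy hpi; rewrite /lexlt !dvalE -/(R j) -/(R j.+1).
    rewrite ltnS; case/orP=> [h|/andP[/eqP h h2]]; first by lia.
    by move: htd; rewrite ltnNge (ltnW h2).
set L := filter (mem t) (iota 1 (size p)).
have Lsort : sorted ltn L.
  apply: sorted_filter; [exact: ltn_trans | exact: iota_ltn_sorted].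
have Lt x : (x \in L) = (x \in t).
  rewrite mem_filter /= mem_iota add1n ltnS -(perm_memP _ hp).
  by case hx: (x \in t) => //=; rewrite tmem.
have uL : uniq L by rewrite filter_uniq // iota_uniq.
have sL : size L = size s by rewrite -sz; apply: perm_size; apply: uniq_perm.
pose chi y := nth 0 s (index y t).
have chiL : map chi L = iota 1 (size s).
  apply: (irr_sorted_eq ltn_trans ltnn); last 1 first.
  - move=> z; rewrite mem_iota add1n ltnS -(perm_memP _ hs).
    apply/mapP/idP => [[y hy ->]|hz].
      by apply: mem_nth; rewrite -sz index_mem -Lt.
    exists (nth 0 t (index z s)).
      by rewrite Lt mem_nth // sz index_mem.
    by rewrite /chi index_uniq ?nth_index // sz index_mem.
  - rewrite sorted_map.
    apply: (@sub_in_sorted _ (fun x => x \in t) ltn); last 2 first.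
    + by apply/allP=> x; rewrite Lt.
    + exact: Lsort.
    move=> x y hx hy; rewrite /relpre /chi /= => hxy.
    have hxi : index x t < size s by rewrite -sz index_mem.
    have hyi : index y t < size s by rewrite -sz index_mem.
    by rewrite iso // !nth_index.
  - exact: iota_ltn_sorted.
have key i : i < size s -> nth 0 L (nth 0 s i).-1 = nth 0 t i.
  move=> hi; have hy : nth 0 t i \in L by rewrite Lt mem_nth // sz.
  have ht : index (nth 0 t i) L < size s by rewrite -sL index_mem.
  have := congr1 (nth 0 ^~ (index (nth 0 t i) L)) chiL.
  rewrite (nth_map 0) ?sL // nth_iota // nth_index // /chi index_uniq ?sz // => ->.
  by rewrite add1n /= nth_index.
have -> : fmap s = map (dval p) L.
  apply: (@eq_from_nth _ 0); rewrite size_fmap ?size_map ?sL // => j hj.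
  rewrite nth_fmap // (nth_map 0) ?sL //.
  have hjs : j.+1 \in s by rewrite (perm_memP _ hs).
  set i := index j.+1 s.
  have hi : i < size s by rewrite index_mem.
  have := key i hi; rewrite nth_index //= => ->.
  rewrite !dvalE -/(R i) RQ //.
apply: map_subseq; exact: filter_subseq.
Qed.

Theorem mainTheorem3 (k : nat) :
  [/\ (forall pi, is_perm pi -> des pi = k -> inAhat k.+1 (fmap pi)),
      (forall sigma pi, is_perm sigma -> des sigma = k ->
                        is_perm pi -> des pi = k ->
                        fmap sigma = fmap pi -> sigma = pi),
      (forall w, inAhat k.+1 w ->
                 exists pi, [/\ is_perm pi, des pi = k & fmap pi = w])
    & (forall sigma pi, is_perm sigma -> des sigma = k ->
                        is_perm pi -> des pi = k ->
                        (pat_le sigma pi <-> subseq (fmap sigma) (fmap pi)))].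
Proof.
split.
- exact: part1.
- exact: part2.
- move=> w hw; exact: part3 hw.
- move=> s p hs ks hp kp; split; first exact: part4a ks hp kp.
  exact: part4b.
Qed.
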